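(* Let $E$ be a real Banach space and $\mathcal{C}\subset E$ a regular Birkhoff cone with $\ell\in E'$, $\|\ell\|=1$, and $K<\infty$ such that $\frac1K\|u\|\le\langle\ell,u\rangle\le\|u\|$ for $u\in\mathcal{C}$, and let $\rho>0$ with $\mathcal{C}(\rho)=\{x\in\mathcal{C}:B(x,\rho\|x\|)\subset\mathcal{C}\}$. Let $L\in L(E)$ with $L(\mathcal{C})\subset\mathcal{C}$. Then for every $x\in\mathcal{C}(\rho)\setminus\{0\}$, \[\frac\rho K\|L\|\,\|x\|\le\langle\ell,Lx\rangle\le\|L\|\,\|x\|\quad\text{and}\quad\frac\rho K\|L\|\le\frac{\langle\ell,Lx\rangle}{\langle\ell,x\rangle}\le K\|L\|.\]
   Context: A Birkhoff cone is a closed convex set $\mathcal{C}\subset E$ with $\mathbb{R}_+\mathcal{C}=\mathcal{C}$ and $\mathcal{C}\cap(-\mathcal{C})=\{0\}$; regular means it has non-empty interior and the stated outer regularity functional exists. *)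

(* Defs.v *)
From HB Require Import structures.
From mathcomp Require Import all_boot all_order all_algebra.
From mathcomp Require Import all_classical all_reals all_analysis.
Set Implicit Arguments. Unset Strict Implicit. Unset Printing Implicit Defensive.
Import Order.TTheory GRing.Theory Num.Theory.
Import numFieldNormedType.Exports.
Local Open Scope classical_set_scope.
Local Open Scope ring_scope.

Definition opnorm (R : realType) (V W : normedModType R) (f : V -> W) : R :=
  sup [set `|f x| | x in [set x : V | `|x| <= 1]].

Definition birkhoff_cone (R : realType) (E : normedModType R) (C : set E) : Prop :=
  [/\ closed C,
      (forall x y (t : R), C x -> C y -> 0 <= t -> t <= 1 -> C (t *: x + (1 - t) *: y)),
      [set t *: x | t in [set t : R | 0 <= t] & x in C] = C &
      C `&` [set - x | x in C] = [set 0]].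

Definition cone_rho (R : realType) (E : normedModType R) (C : set E) (rho : R) : set E :=
  [set x | C x /\ ball x (rho * `|x|) `<=` C].

(* Main.v *)
Require Import Defs.
From HB Require Import structures.
From mathcomp Require Import all_boot all_order all_algebra.
From mathcomp Require Import all_classical all_reals all_analysis.
From mathcomp Require Import ring lra unstable.
Import Order.TTheory GRing.Theory Num.Theory.
Import numFieldNormedType.Exports.
Local Open Scope classical_set_scope.
Local Open Scope ring_scope.

Lemma opnorm_ge (R : realType) (E : normedModType R) (L : {linear E -> E}) :
  continuous L -> forall x : E, `|L x| <= opnorm L * `|x|.
Proof.
move=> cL x.
have hub : has_ubound [set `|L z| | z in [set z : E | `|z| <= 1]].
  have /(bounded_funP L) /(_ 1) [M HM] := proj2 (linear_bounded_continuous L) cL.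
  by exists M => _ [z /= hz <-]; apply: HM.
have [->|x0] := eqVneq x 0; first by rewrite raddf0 !normr0 mulr0.
have nx : 0 < `|x| by rewrite normr_gt0.
set u := `|x|^-1 *: x.
have hu : `|L u| <= opnorm L.
  apply: ub_le_sup => //; exists u => //=.
  by rewrite /u normrZ normfV normr_id mulVf // gt_eqF.
have -> : L x = `|x| *: L u.
  by rewrite /u linearZ /= scalerA mulfV ?gt_eqF // scale1r.
rewrite normrZ normr_id mulrC.
by rewrite ler_wpM2r // ltW.
Qed.

Theorem lemmaA9 (R : realType) (E : completeNormedModType R) (C : set E)
  (l : {linear E -> R^o}) (K rho : R) (L : {linear E -> E}) :
  birkhoff_cone C ->
  interior C !=set0 ->
  continuous l -> opnorm l = 1 ->
  0 < K ->
  (forall u, C u -> K^-1 * `|u| <= l u /\ l u <= `|u|) ->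
  0 < rho ->
  continuous L ->
  (forall x, C x -> C (L x)) ->
  forall x, cone_rho C rho x -> x != 0 ->
    [/\ rho / K * opnorm L * `|x| <= l (L x),
        l (L x) <= opnorm L * `|x|,
        rho / K * opnorm L <= l (L x) / l x &
        l (L x) / l x <= K * opnorm L].
Proof.
move=> _ _ _ _ K0 Hl rho0 cL LC x [Cx Bx] x0.
have nx : 0 < `|x| by rewrite normr_gt0.
have lLx0 : 0 <= l (L x).
  have [h _] := Hl _ (LC _ Cx); apply: le_trans h.
  by rewrite mulr_ge0 // ?invr_ge0 ltW.
have lx0 : 0 < l x.
  have [h _] := Hl _ Cx; apply: lt_le_trans h.
  by rewrite mulr_gt0 // invr_gt0.
have up : l (L x) <= opnorm L * `|x|.
  have [_ h] := Hl _ (LC _ Cx); apply: le_trans h _.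
  exact: opnorm_ge.
have key : forall y, `|y| < rho * `|x| -> `|L y| <= K * l (L x).
  move=> y hy.
  have C1 : C (x + y).
    apply: Bx; rewrite -ball_normE /= opprD addrA subrr add0r normrN //.
  have C2 : C (x - y).
    apply: Bx; rewrite -ball_normE /= opprB addrC subrK //.
  have [h1 _] := Hl _ (LC _ C1).
  have [h2 _] := Hl _ (LC _ C2).
  have e : l (L (x + y)) + l (L (x - y)) = 2 * l (L x).
    rewrite !linearD !linearN /=; ring.
  have e2 : `|L y| * 2 <= `|L (x + y)| + `|L (x - y)|.
    have -> : `|L y| * 2 = `|L (x + y) - L (x - y)|.
      rewrite -linearB /= opprB addrC addrA subrK -mulr2n.
      by rewrite linearMn normrMn mulr2n; ring.
    by apply: le_trans (ler_normB _ _); rewrite lexx.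
  have e3 : `|L (x + y)| + `|L (x - y)| <= K * (2 * l (L x)).
    rewrite -e mulrDr.
    by apply: lerD; rewrite -ler_pdivrMl // ?mulrC.
  rewrite -(ler_pM2r (_ : 0 < 2 :> R)) //.
  by apply: le_trans e2 _; rewrite -mulrA [l _ * _]mulrC.
have low : opnorm L <= K * l (L x) / (rho * `|x|).
  apply: ge_sup; first by exists 0, 0 => //=; rewrite ?normr0 ?ler01 // raddf0 normr0.
  move=> _ [z /= hz <-].
  rewrite ler_pdivlMr ?mulr_gt0 //.
  apply/ler_ltP => w hw.
  have [w0|w0] := leP w 0.
    by apply: le_trans w0 _; rewrite mulr_ge0 // ltW.
  have a0 : 0 < `|L z| * (rho * `|x|) by apply: lt_trans hw.
  set s := w / (`|L z| * (rho * `|x|)).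
  have s0 : 0 < s by rewrite divr_gt0.
  have s1 : s < 1 by rewrite ltr_pdivrMr // mul1r.
  have ew : s * (rho * `|x|) * `|L z| = w.
    by rewrite /s -mulrA [_ * `|L z|]mulrC divfK // gt_eqF.
  clearbody s.
  have sr0 : 0 <= s * (rho * `|x|) by apply: mulr_ge0; [exact: ltW | apply: ltW; exact: mulr_gt0].
  have hk := key ((s * (rho * `|x|)) *: z).
  rewrite linearZ /= normrZ (ger0_norm sr0) normrZ (ger0_norm sr0) ew in hk; apply: hk.
  apply: le_lt_trans (_ : s * (rho * `|x|) * `|z| <= s * (rho * `|x|)) _.
    by rewrite -[leRHS]mulr1 ler_wpM2l.
  by rewrite -[ltRHS]mul1r ltr_pM2r // mulr_gt0.
have lowx : rho / K * opnorm L * `|x| <= l (L x).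
  have h : rho / K * `|x| * opnorm L <= rho / K * `|x| * (K * l (L x) / (rho * `|x|)).
    by apply: ler_wpM2l => //; rewrite mulr_ge0 // ?divr_ge0 // ltW.
  have e : rho / K * `|x| * (K * l (L x) / (rho * `|x|)) = l (L x).
    by field; rewrite !gt_eqF.
  by rewrite e in h; rewrite mulrAC.
have opn0 : 0 <= opnorm L.
  have := @opnorm_ge _ _ L cL x; rewrite -ler_pdivrMr // => h.
  by apply: le_trans h; rewrite divr_ge0.
have [lxK lxn] := Hl _ Cx.
split => //.
- rewrite ler_pdivlMr //; apply: le_trans lowx.
  by rewrite ler_wpM2l // mulr_ge0 // ?divr_ge0 ?ltW.
- rewrite ler_pdivrMr //; apply: le_trans up _.
  rewrite [K * _]mulrC -mulrA ler_wpM2l //.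
  have : `|x| / K <= l x by rewrite mulrC.
  by rewrite ler_pdivrMr // mulrC.
Qed.
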